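(* Let $(N,M,W,C,P,\infty)$ be an MRS-situation with unbounded production and $(N,M,v)$ the corresponding MRS-game. Then the set $M^o$ of optimal suppliers satisfies $|M^o|\ge 1$.
   Context: An MRS-situation $(N,M,W,C,P,\overline{Q})$ consists of a finite set $N$ of retailers and a finite set $M$ of suppliers (distinct agents), and: for each $j\in M$ a unit production cost $c_j:[0,\infty)\to(0,\infty)$, decreasing and continuous with $c_j(q)q$ nondecreasing, and a wholesale price $w_j:[0,\infty)\to(0,\infty)$, nonincreasing and continuous, with $w_j(q)>c_j(q)$ for all $q\ge0$ and $w_j(q)q$ nondecreasing; for each $i\in N$ a selling price $p_i:[0,\infty)\to\mathbb{R}$, nonincreasing and continuous, with $p_i(0)>w_j(0)$ for all $j$, and $q_i^*>0$ with $p_i(q_i^* )=0$; and capacities $\overline{q}_{ij}\in(0,\infty)$. The situation has unbounded production, written $(N,M,W,C,P,\infty)$, if $\overline{q}_{ij}=K$ for all $i,j$ with $K$ large enough that the capacities do not affect optimal solutions (e.g. $K\ge\max_{i\in N}q_i^*$, so capacity constraints are implied by $q_{iM}\le q_i^*$). For an order matrix $q=(q_{ij})_{i\in R,j\in M}\ge0$: $q_{Rj}=\sum_{i\in R}q_{ij}$, $q_{iM}=\sum_{j}q_{ij}$, $q_{RS}=\sum_{j\in S}\sum_{i\in R}q_{ij}$, $q_i=(q_{ij})_j$, $q_R=(q_{Rj})_j$; $c_S(x)=\min_{j\in S}c_j(x)$. For $i\in R$: $\Pi_i(q_i,\Psi^S(q_R))=p_i(q_{iM})q_{iM}-\sum_{j\in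 S}c_S(q_{RS})q_{ij}-\sum_{j\in M\setminus S}w_j(q_{Rj})q_{ij}$. $\mathbb{Q}^R=\{q\in\mathbb{R}_+^{R\times M}: q_{iM}\le q_i^*,\ q_{ij}\le\overline{q}_{ij}\}$; $q^{(R,S)}$ is an optimal solution of $\max\{\sum_{i\in R}\Pi_i(q_i,\Psi^S(q_R)):q\in\mathbb{Q}^R\}$. MRS-game: $v(R,S)=\sum_{i\in R}\Pi_i(q_i^{(R,S)},\Psi^S(q_R^{(R,S)}))$ for $\emptyset\ne R\subseteq N$, $S\subseteq M$, $v(\emptyset,S)=0$. A supplier $j\in M$ is optimal if $v(N,M)=v(N,\{j\})$; $M^o$ is the set of optimal suppliers. *)

(* Defs.v *)
From HB Require Import structures.
From mathcomp Require Import all_boot all_order all_algebra.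
From mathcomp Require Import all_classical all_reals all_analysis.
Set Implicit Arguments. Unset Strict Implicit. Unset Printing Implicit Defensive.
Import Order.TTheory GRing.Theory Num.Theory numFieldNormedType.Exports.
Local Open Scope classical_set_scope.
Local Open Scope ring_scope.

Section MRS.
Variables (R : realType) (I J : finType).
(* I = retailers N, J = suppliers M (both as finite types; coalitions are
   finite subsets). *)
Variables (c w : J -> R -> R) (p : I -> R -> R) (qstar : I -> R)
          (qbar : I -> J -> R).

(* c_S(x) = min_{j in S} c_j(x)  (only used when S is nonempty) *)
Definition cS (S : {set J}) (x : R) : R :=
  if [pick j in S] is Some j0 then \big[Order.min/c j0 x]_(j in S) c j x
  else 0.

Definition qiM (q : I -> J -> R) (i : I) : R := \sum_j q i j.
Definition qRj (q : I -> J -> R) (Rc : {set I}) (j : J) : R :=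
  \sum_(i in Rc) q i j.
Definition qRS (q : I -> J -> R) (Rc : {set I}) (S : {set J}) : R :=
  \sum_(j in S) \sum_(i in Rc) q i j.

Definition Pi (Rc : {set I}) (S : {set J}) (q : I -> J -> R) (i : I) : R :=
  p i (qiM q i) * qiM q i
  - \sum_(j in S) cS S (qRS q Rc S) * q i j
  - \sum_(j in ~: S) w j (qRj q Rc j) * q i j.

(* Q^R : feasible order matrices for coalition R (entries outside R are
   irrelevant to the objective). *)
Definition feasible (Rc : {set I}) (q : I -> J -> R) : Prop :=
  forall i, i \in Rc ->
    qiM q i <= qstar i /\ forall j, 0 <= q i j /\ q i j <= qbar i j.

Definition total_profit (Rc : {set I}) (S : {set J}) (q : I -> J -> R) : R :=
  \sum_(i in Rc) Pi Rc S q i.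

Definition v (Rc : {set I}) (S : {set J}) : R :=
  if (#|Rc| == 0)%N then 0
  else sup [set total_profit Rc S q | q in feasible Rc].

Definition optimal_suppliers : {set J} :=
  [set j | v [set: I] [set: J] == v [set: I] [set j]].

End MRS.

Definition nonneg {R : realType} : set R := [set x | 0 <= x].

Record MRS_situation {R : realType} {I J : finType}
  (c w : J -> R -> R) (p : I -> R -> R) (qstar : I -> R)
  (qbar : I -> J -> R) : Prop := {
  c_pos : forall j x, 0 <= x -> 0 < c j x;
  c_decr : forall j x y, 0 <= x -> x < y -> c j y < c j x;
  c_cont : forall j, {within (@nonneg R), continuous (c j : R -> R)};
  c_mul_nondecr : forall j x y, 0 <= x -> x <= y -> c j x * x <= c j y * y;
  w_pos : forall j x, 0 <= x -> 0 < w j x;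
  w_nonincr : forall j x y, 0 <= x -> x <= y -> w j y <= w j x;
  w_cont : forall j, {within (@nonneg R), continuous (w j : R -> R)};
  w_gt_c : forall j x, 0 <= x -> c j x < w j x;
  w_mul_nondecr : forall j x y, 0 <= x -> x <= y -> w j x * x <= w j y * y;
  p_nonincr : forall i x y, 0 <= x -> x <= y -> p i y <= p i x;
  p_cont : forall i, {within (@nonneg R), continuous (p i : R -> R)};
  p0_gt_w0 : forall i j, w j 0 < p i 0;
  qstar_pos : forall i, 0 < qstar i;
  p_qstar : forall i, p i (qstar i) = 0;
  qbar_pos : forall i j, 0 < qbar i j
}.

Definition unbounded_production {R : realType} {I J : finType}
  (qstar : I -> R) (qbar : I -> J -> R) (K : R) : Prop :=
  (forall i j, qbar i j = K) /\ (forall i, qstar i <= K).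

(* Main.v *)
Require Import Defs.
From HB Require Import structures.
From mathcomp Require Import all_boot all_order all_algebra.
From mathcomp Require Import all_classical all_reals all_analysis.
From mathcomp Require Import lra.
Import Order.TTheory GRing.Theory Num.Theory.
Local Open Scope ring_scope.

Theorem lemma3 (R : realType) (I J : finType)
  (c w : J -> R -> R) (p : I -> R -> R) (qstar : I -> R)
  (qbar : I -> J -> R) (K : R) :
  MRS_situation c w p qstar qbar ->
  unbounded_production qstar qbar K ->
  (0 < #|J|)%N ->
  (1 <= #|optimal_suppliers c w p qstar qbar|)%N.
Proof.
move=> H [HK HqK] HJ.
have [j0 _] : {j0 : J | true}.
  by case: (pickP (fun _ : J => true)) HJ => [j0 _|/eq_card0 ->] //; exists j0.
pose F := fun q S => total_profit c w p [set: I] S q.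
pose A := fun S => ([set F q S | q in feasible qstar qbar [set: I]])%classic.
have cdec : forall j x y, 0 <= x -> x <= y -> c j y <= c j x.
  move=> j x y x0; rewrite le_eqVlt => /orP [/eqP -> //|xy].
  by apply/ltW; apply: (c_decr H).
have cSge0 : forall S x, 0 <= x -> 0 <= cS c S x.
  move=> S x x0; rewrite /cS; case: pickP => [j1 _|_] //.
  apply: (big_ind (fun y => 0 <= y)); first exact/ltW/(c_pos H).
    by move=> a b a0 b0; rewrite le_min a0 b0.
  by move=> j _; exact/ltW/(c_pos H).

have qge0 : forall q, feasible qstar qbar [set: I] q -> forall i j, 0 <= q i j.
  by move=> q fq i j; case: (fq i (finset.in_setT i)) => _ /(_ j) [].
have qiMge0 : forall q, feasible qstar qbar [set: I] q -> forall i, 0 <= qiM q i.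
  by move=> q fq i; apply: sumr_ge0 => j _; exact: qge0.
have qRjge0 : forall q, feasible qstar qbar [set: I] q -> forall j, 0 <= qRj q [set: I] j.
  by move=> q fq j; apply: sumr_ge0 => i _; exact: qge0.
have qRSge0 : forall q S, feasible qstar qbar [set: I] q -> 0 <= qRS q [set: I] S.
  by move=> q S fq; apply: sumr_ge0 => j _; apply: sumr_ge0 => i _; exact: qge0.
pose Bd := \sum_(i in [set: I]) p i 0 * qstar i.
have bound : forall q S, feasible qstar qbar [set: I] q -> F q S <= Bd.
  move=> q S fq; rewrite /F /total_profit /Bd; apply: ler_sum => i _.
  rewrite /Pi.
  have h1 : 0 <= \sum_(j in S) cS c S (qRS q [set: I] S) * q i j.
    by apply: sumr_ge0 => j _; apply: mulr_ge0; [apply: cSge0; exact: qRSge0|exact: qge0].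
  have h2 : 0 <= \sum_(j in ~: S) w j (qRj q [set: I] j) * q i j.
    by apply: sumr_ge0 => j _; apply: mulr_ge0; [apply/ltW/(w_pos H); exact: qRjge0|exact: qge0].
  have [hs _] := fq i (finset.in_setT i).
  have h3 : p i (qiM q i) * qiM q i <= p i 0 * qstar i.
    have a0 := qiMge0 q fq i.
    have a1 : 0 <= p i (qiM q i).
      by rewrite -(p_qstar H i); apply: (p_nonincr H).
    by apply: ler_pM => //; apply: (p_nonincr H).
  lra.

have cS1 : forall j y, cS c [set j] y = c j y.
  move=> j y; rewrite /cS; case: pickP => [j1|/(_ j)]; last by rewrite set11.
  rewrite inE => /eqP ->.
  apply: (big_ind (fun z => z = c j y)) => //; first by move=> a b -> ->; rewrite minxx.
  by move=> k; rewrite inE => /eqP ->.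
have cSle : forall k x, cS c [set: J] x <= c k x.
  move=> k x; rewrite /cS; case: pickP => [j1 _|/(_ k)]; last by rewrite finset.in_setT.
  by apply: bigmin_le_cond; rewrite finset.in_setT.
have cSat : forall x, exists k, cS c [set: J] x = c k x.
  move=> x; rewrite /cS; case: pickP => [j1 _|/(_ j0)]; last by rewrite finset.in_setT.
  apply: (big_ind (fun y => exists k, y = c k x)); first by exists j1.
    by move=> a b [ka ->] [kb ->]; case: (leP (c ka x) (c kb x)) => _; [exists ka|exists kb].
  by move=> k _; exists k.
have domB : forall q j, feasible qstar qbar [set: I] q -> F q [set j] <= F q [set: J].
  move=> q j fq; rewrite /F /total_profit; apply: ler_sum => i _; rewrite /Pi.
  rewrite finset.setCT finset.big_set0 subr0.
  set X := qRS q [set: I] [set: J].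
  have qX : forall k, qRj q [set: I] k <= X.
    move=> k; rewrite /X /qRS (bigD1 k) ?finset.in_setT //= lerDl.
    by apply: sumr_ge0 => k' _; apply: sumr_ge0 => i' _; exact: qge0.
  have X0 : 0 <= X by exact: qRSge0.
  rewrite finset.big_set1 [X in _ <= _ - X](bigD1 j) ?finset.in_setT //=.
  have -> : qRS q [set: I] [set j] = qRj q [set: I] j.
    by rewrite /qRS finset.big_set1.
  rewrite cS1.
  have -> : \sum_(k in ~: [set j]) w k (qRj q [set: I] k) * q i k
        = \sum_(k | (k \in [set: J]) && (k != j)) w k (qRj q [set: I] k) * q i k.
    by apply: eq_bigl => k; rewrite !inE.
  have h1 : cS c [set: J] X * q i j <= c j (qRj q [set: I] j) * q i j.
    apply: ler_wpM2r; first exact: qge0.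
    apply: le_trans (cSle j X) _; apply: cdec => //; exact: qRjge0.
  have h2 : \sum_(k | (k \in [set: J]) && (k != j)) cS c [set: J] X * q i k
         <= \sum_(k | (k \in [set: J]) && (k != j)) w k (qRj q [set: I] k) * q i k.
    apply: ler_sum => k _; apply: ler_wpM2r; first exact: qge0.
    apply: le_trans (cSle k X) _; apply: le_trans (cdec k _ _ (qRjge0 q fq k) (qX k)) _.
    exact/ltW/(w_gt_c H)/qRjge0.
  lra.

have sT : forall (T : finType) (G : T -> R), \sum_(l in [set: T]) G l = \sum_l G l.
  by move=> T G; apply: eq_bigl => l; rewrite finset.in_setT.
have domA : forall q, feasible qstar qbar [set: I] q ->
    exists k q', feasible qstar qbar [set: I] q' /\ F q [set: J] <= F q' [set k].
  move=> q fq.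
  set X := qRS q [set: I] [set: J].
  have [k hk] := cSat X.
  pose q' := fun i l => if l == k then qiM q i else 0.
  have qM' : forall i, qiM q' i = qiM q i.
    move=> i; rewrite /qiM (bigD1 k) //= /q' eqxx big1 ?addr0 // => l /negbTE -> //.
  exists k, q'; split.
    move=> i _; rewrite qM'; have [hs _] := fq i (finset.in_setT i); split => // l.
    have K0 := le_trans (ltW (qstar_pos H i)) (HqK i).
    rewrite /q' HK; case: (l == k); last by rewrite lexx.
    by split; [exact: qiMge0|exact: le_trans hs (HqK i)].
  rewrite /F /total_profit; apply: ler_sum => i _; rewrite /Pi qM'.
  rewrite finset.setCT finset.big_set0 finset.big_set1 cS1.
  have -> : qRS q' [set: I] [set k] = X.
    rewrite /qRS finset.big_set1 /X /qRS exchange_big /= !sT; apply: eq_bigr => i' _.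
    by rewrite /q' eqxx /qiM sT.
  have -> : \sum_(l in ~: [set k]) w l (qRj q' [set: I] l) * q' i l = 0.
    by apply: big1 => l; rewrite !inE => /negbTE hl; rewrite /q' hl mulr0.
  rewrite -mulr_sumr sT /q' eqxx -hk /qiM.
  lra.

have f0 : feasible qstar qbar [set: I] (fun _ _ => 0).
  move=> i _; split.
    by rewrite /qiM big1 //; apply: ltW; apply: (qstar_pos H).
  by move=> j; rewrite lexx; split => //; apply: ltW; apply: (qbar_pos H).
have ne : forall S, (A S !=set0)%classic.
  by move=> S; exists (F (fun _ _ => 0) S); exists (fun _ _ => 0).
have hub : forall S, has_ubound (A S).
  by move=> S; exists Bd => a [q fq <-]; exact: bound.
have inA : forall S q, feasible qstar qbar [set: I] q -> F q S <= sup (A S).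
  by move=> S q fq; apply: ub_le_sup => //; exists q.
pose vj := fun j => v c w p qstar qbar [set: I] [set j].
have [jm _ Hjm] := @arg_maxP _ R J j0 xpredT vj isT.
apply/card_gt0P; exists jm; rewrite inE; apply/eqP.
rewrite /vj /v in Hjm *.
case: ifP => hI.
  by [].
have {}Hjm : forall j, sup (A [set j]) <= sup (A [set jm]).
  by move=> j; move: (Hjm j isT); rewrite /= hI.
apply: le_anti; apply/andP; split.
  apply: ge_sup; first exact: ne.
  move=> a [q fq <-]; have [k [q' [fq' h]]] := domA q fq.
  apply: le_trans h _; apply: le_trans (inA _ _ fq') _; exact: Hjm.
apply: ge_sup; first exact: ne.
move=> a [q fq <-]; apply: le_trans (domB q jm fq) _; exact: inA.
Qed.
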